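(* $\mathcal{F}_0\subseteq\mathcal{F}$.
   Context: Let $G=(V,E)$ be a finite undirected graph with $V=Q\cup R\cup B$ (pairwise disjoint), where $Q$ is the set of sources, $R$ the set of potential relay locations and $B$ the set of potential sink locations; let $h_{\max}$ be a positive integer and $c_s,c_r\ge0$. Form the augmented graph $\tilde G=(\tilde V,\tilde E)$ with $\tilde V=V\cup\{0\}$, where $0$ is a new vertex (virtual sink), and $\tilde E=E\cup\{\{0,b\}:b\in B\}$. Let $\tilde R=R\cup B$ with node costs $c_j=c_r$ for $j\in R$ and $c_j=c_s$ for $j\in B$. For a source $k\in Q$, a node cut for $k$ is a set $\gamma\subseteq\tilde V\setminus\{k,0\}$ whose deletion disconnects $k$ from $0$ in $\tilde G$; it is minimal if no proper subset is a node cut; $\Gamma^k$ denotes the set of minimal node cuts for $k$. A vector $\underline y=((y_{j,k})_{k\in Q,\,j\in\tilde V\setminus\{k,0\}},(y_j)_{j\in\tilde R})$ belongs to $\mathcal F$ iff: (i) $\sum_{j\in\gamma}y_{j,k}\ge1$ for all $\gamma\in\Gamma^k$, $k\in Q$; (ii) $y_j\ge y_{j,k}$ for all $j\in\tilde R$, $k\in Q$; (iii) $\sum_{j\in\tilde V\setminus\{k,0\}}y_{j,k}\le h_{\max}$ for all $k\in Q$; (iv) all $y_{j,k},y_j\in\{0,1\}$. For $k\in Q$ let $\mathcal P'_k$ be the set of paths in $\tilde G$ from $k$ to $0$ with at most $h_{\max}+1$ edges, and let $\mathcal U_0$ be the set of tuples $\underline g=(p_k)_{k\in Q}$ with $p_k\in\mathcal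 P'_k$. For $\underline g\in\mathcal U_0$ define $\underline x(\underline g)$ by $x_{j,k}=1$ if $j$ is a vertex of $p_k$ and $0$ otherwise ($k\in Q$, $j\in\tilde V\setminus\{k,0\}$), and $x_j=1$ if $x_{j,k}=1$ for some $k\in Q$ and $0$ otherwise ($j\in\tilde R$). Let $\mathcal F_0=\{\underline x(\underline g):\underline g\in\mathcal U_0\}$. *)

(* Defs.v *)
From mathcomp Require Import all_boot.
Set Implicit Arguments. Unset Strict Implicit. Unset Printing Implicit Defensive.

Section Defs.
Variables (T : finType) (e : rel T) (Q R B : {set T}) (hmax : nat).

(* Augmented graph G~: vertex set option T, where None is the virtual sink 0
   and Some v is the original vertex v; Some b -- None is an edge iff b \in B. *)
Definition aug_edge : rel (option T) := fun u v =>
  match u, v with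
  | Some a, Some b => e a b
  | Some a, None => a \in B
  | None, Some b => b \in B
  | None, None => false
  end.

Definition dom_k (k : T) : {set option T} :=
  [set j : option T | (j != Some k) && (j != None)].

Definition Rtilde : {set option T} := [set j : option T |
  if j is Some v then (v \in R) || (v \in B) else false].

Definition node_cut (k : T) (gamma : {set option T}) : Prop :=
  gamma \subset dom_k k /\
  ~ (exists p : seq (option T),
        [&& path aug_edge (Some k) p, last (Some k) p == None
          & all (fun v => v \notin gamma) p]).

Definition min_node_cut (k : T) (gamma : {set option T}) : Prop :=
  node_cut k gamma /\ forall gamma' : {set option T}, gamma' \proper gamma -> ~ node_cut k gamma'.

(* The feasible set F.  yk k j = y_{j,k}, yr j = y_j; only the entries with
   k \in Q, j \in V~\{k,0} (resp. j \in R~) are meaningful/constrained. *)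
Definition in_F (yk : T -> option T -> nat) (yr : option T -> nat) : Prop :=
  (forall k, k \in Q -> forall gamma, min_node_cut k gamma ->
     1 <= \sum_(j in gamma) yk k j) /\
  (forall j, j \in Rtilde -> forall k, k \in Q -> yk k j <= yr j) /\
  (forall k, k \in Q -> \sum_(j in dom_k k) yk k j <= hmax) /\
  (forall k, k \in Q -> forall j, j \in dom_k k -> (yk k j == 0) || (yk k j == 1)) /\
  (forall j, j \in Rtilde -> (yr j == 0) || (yr j == 1)).

Definition in_Pk (k : T) (p : seq (option T)) : Prop :=
  [/\ path aug_edge (Some k) p, last (Some k) p = None,
      uniq (Some k :: p) & size p <= hmax.+1].

(* x(g) for g = (p_k)_{k in Q}, represented by g : T -> seq (option T). *)
Definition x_k (g : T -> seq (option T)) (k : T) (j : option T) : nat :=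
  nat_of_bool (j \in Some k :: g k).

Definition x_r (g : T -> seq (option T)) (j : option T) : nat :=
  nat_of_bool [exists k in Q, x_k g k j == 1].

Definition in_F0 (yk : T -> option T -> nat) (yr : option T -> nat) : Prop :=
  exists g : T -> seq (option T), (forall k, k \in Q -> in_Pk k (g k)) /\
    (forall k, k \in Q -> forall j, j \in dom_k k -> yk k j = x_k g k j) /\
    (forall j, j \in Rtilde -> yr j = x_r g j).
End Defs.

(* Main.v *)
Require Import Defs.
From mathcomp Require Import all_boot.

Lemma sum_mem_card (T : finType) (s : seq T) :
  \sum_(j : T) nat_of_bool (j \in s) = #|s|.
Proof.
rewrite -sum1_card [RHS]big_mkcond /=.
by apply: eq_bigr => j _; case: (j \in s).
Qed.

Theorem lemma2 (T : finType) (e : rel T) (Q R B : {set T}) (hmax : nat)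
  (c_s c_r : nat)
  (e_sym : symmetric e) (e_irr : irreflexive e)
  (dQR : [disjoint Q & R]) (dQB : [disjoint Q & B]) (dRB : [disjoint R & B])
  (VQRB : Q :|: R :|: B = [set: T])
  (hmax_pos : 0 < hmax) :
  forall (yk : T -> option T -> nat) (yr : option T -> nat),
    in_F0 e Q R B hmax yk yr -> in_F e Q R B hmax yk yr.
Proof.
move=> yk yr [g [Hg [Hyk Hyr]]].
split; [|split; [|split; [|split]]].
- move=> k kQ gamma [[sub ncut] _].
  case: (Hg k kQ) => pth lst un sz.
  have [j jg jgam] : exists2 j, j \in gamma & j \in g k.
    apply/exists_inP; apply: contraT; rewrite negb_exists_in => /forall_inP H.
    exfalso; apply: ncut; exists (g k); rewrite pth lst eqxx /=.
    apply/allP => j jp; apply/negP => jgam; by move: (H j jgam); rewrite jp.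
  rewrite (bigD1 j) //= Hyk //; last by apply: (subsetP sub).
  by rewrite /x_k inE jgam orbT.
- move=> j jR k kQ.
  have jd : j \in dom_k k.
    move: jR; rewrite !inE; case: j => [v|] //= vRB.
    rewrite andbT; apply/negP => /eqP [vk]; subst v.
    case/orP: vRB => vin.
    + by move/disjoint_setI0: dQR => /setP/(_ k); rewrite !inE kQ vin.
    + by move/disjoint_setI0: dQB => /setP/(_ k); rewrite !inE kQ vin.
  rewrite Hyk // Hyr // /x_r.
  case H: (x_k g k j) => [|n] //.
  have -> : [exists k0 in Q, x_k g k0 j == 1].
    apply/exists_inP; exists k => //.
    by move: H; rewrite /x_k; case: (j \in _).
  by move: H; rewrite /x_k; case: (j \in _) => //= -[<-].
- move=> k kQ.
  case: (Hg k kQ) => pth lst un sz.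
  have Nin : None \in g k.
    by move: lst; case/lastP: (g k) => [|s x] //=; rewrite last_rcons => ->; rewrite mem_rcons inE eqxx.
  have un' : uniq (g k) by case/andP: un.
  apply: (@leq_trans (\sum_(j : option T) nat_of_bool (j \in rem None (g k)))).
    apply: (@leq_trans (\sum_(j in dom_k k) nat_of_bool (j \in rem None (g k)))).
      apply: leq_sum => j jd; rewrite Hyk // /x_k.
      move: jd; rewrite !inE => /andP [jk jN].
      by rewrite (negbTE jk) /= (mem_rem_uniq _ un') !inE jN.
    by rewrite [X in _ <= X](bigID (mem (dom_k k))) /= leq_addr.
  rewrite sum_mem_card.
  have /card_uniqP -> : uniq (rem None (g k)) by apply: rem_uniq.
  rewrite size_rem //; move: sz; case: (size (g k)) => //.
- move=> k kQ j jd; rewrite Hyk // /x_k; by case: (j \in _).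
- move=> j jR; rewrite Hyr // /x_r; by case: [exists _ in _, _].
Qed.
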